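(* Let $k\ge3$, let $G$ be a connected graph without isolated vertices, and let $u\in V(G)$. Let $G_u\bowtie K_k$ denote the graph obtained from the disjoint union of $G$ and a complete graph $K_k$ by identifying $u$ with a vertex of $K_k$. Then $G\in\mathcal F_{\chi,k}$ if and only if $G_u\bowtie K_k\in\mathcal F_{(k,2)}$.
   Context: All graphs are finite and simple. $\mathcal F_{\chi,k}$ is the class of graphs $G$ with $\chi(G)=k$ such that $\chi(H)<k$ for every proper subgraph $H$ of $G$ (for graphs without isolated vertices this is equivalent to $\chi(G-e)=k-1$ for every edge $e$). For a graph $G$, ${\rm es}_{\chi}(G)$ is the minimum number of edges of $G$ whose removal results in a spanning subgraph $G_1$ with $\chi(G_1)=\chi(G)-1$. $G$ is edge-stability critical if ${\rm es}_{\chi}(G-e)<{\rm es}_{\chi}(G)$ for every edge $e\in E(G)$. $\mathcal F_{(k,2)}$ is the class of $(k,2)$-critical graphs, i.e., edge-stability critical graphs $G$ with $\chi(G)=k$ and ${\rm es}_{\chi}(G)=2$. *)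

(* Defs.v *)
(* Finite simple graphs on a finite vertex universe T:
   a vertex set gV and an edge set gE of 2-element subsets of gV. *)
From mathcomp Require Import all_boot.
Set Implicit Arguments. Unset Strict Implicit. Unset Printing Implicit Defensive.

Record graph (T : finType) := Graph { gV : {set T}; gE : {set {set T}} }.

Section Graphs.
Variable T : finType.
Implicit Types G H : graph T.

Definition wf_graph G : Prop :=
  forall e, e \in gE G -> #|e| = 2 /\ e \subset gV G.

Definition subgraph H G : Prop :=
  [/\ gV H \subset gV G, gE H \subset gE G &
      forall e, e \in gE H -> e \subset gV H].

Definition colorable G (c : nat) : bool :=
  [exists f : {ffun T -> 'I_#|T|.+1},
     [forall x in gV G, f x < c] &&
     [forall e in gE G, forall x in e, forall y in e, (x != y) ==> (f x != f y)]].

(* chromatic number: least c such that G is c-colourable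
   (G is always #|T|-colourable, so the minimum ranges over c <= #|T|) *)
Definition chi G : nat := \big[minn/#|T|]_(c < #|T|.+1 | colorable G c) c.

Definition chi_critical (k : nat) G : Prop :=
  chi G = k /\
  forall H, subgraph H G -> (gV H, gE H) <> (gV G, gE G) -> chi H < k.

Definition del_edges G (F : {set {set T}}) : graph T := Graph (gV G) (gE G :\: F).

(* es_chi: least number of edges whose removal lowers chi by one
   (default #|E|+1 if no such set exists; never used in the theorem) *)
Definition es_chi G : nat :=
  \big[minn/#|gE G|.+1]_(F in powerset (gE G) | chi (del_edges G F) == (chi G).-1) #|F|.

Definition es_critical G : Prop :=
  forall e, e \in gE G -> es_chi (del_edges G [set e]) < es_chi G.

Definition k2_critical (k : nat) G : Prop :=
  [/\ es_critical G, chi G = k & es_chi G = 2].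

Definition adj G : rel T := fun x y => [set x; y] \in gE G.

Definition connected G : Prop :=
  forall x y, x \in gV G -> y \in gV G -> connect (adj G) x y.

Definition no_isolated G : Prop :=
  forall x, x \in gV G -> exists2 e, e \in gE G & x \in e.
End Graphs.

(* G_u ⋈ K_k: vertices V(G) + (k-1) new vertices; the new vertices together
   with u form a clique K_k. *)
Definition join_Kk (T : finType) (G : graph T) (u : T) (k : nat)
  : graph (T + 'I_k.-1)%type :=
  Graph
    ([set inl x | x in gV G] :|: [set inr i | i : 'I_k.-1])
    ([set [set (inl x : (T + 'I_k.-1)%type) | x in e] | e : {set T} in gE G]
     :|: [set [set (inr i : (T + 'I_k.-1)%type); inr j] | i in [set: 'I_k.-1], j in [set: 'I_k.-1] & i != j]
     :|: [set [set (inl u : (T + 'I_k.-1)%type); inr i] | i : 'I_k.-1]).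

(* Main.v *)
Require Import Defs.
From mathcomp Require Import all_boot zify.
Set Implicit Arguments. Unset Strict Implicit. Unset Printing Implicit Defensive.

Section Gen.
Variable S : finType.
Implicit Types (H : graph S) (F : {set {set S}}).

Definition col (V : {set S}) (E : {set {set S}}) (c : nat) : Prop :=
  exists f : S -> nat, (forall x, x \in V -> f x < c) /\
    (forall e, e \in E -> forall x y, x \in e -> y \in e -> x != y -> f x != f y).

Definition ewf (H : graph S) := forall e, e \in gE H -> e \subset gV H.

Lemma col_sub (V1 V2 : {set S}) (E1 E2 : {set {set S}}) c d : V2 \subset V1 -> E2 \subset E1 -> c <= d ->
  col V1 E1 c -> col V2 E2 d.
Proof.
move=> sV sE cd [f [Hb He]]; exists f; split.
  by move=> x /(subsetP sV) /Hb; lia.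
by move=> e /(subsetP sE); apply: He.
Qed.

Lemma bigmin_le (I : eqType) (r : seq I) (P : pred I) (F : I -> nat) d i0 :
  i0 \in r -> P i0 -> \big[minn/d]_(i <- r | P i) F i <= F i0.
Proof.
elim: r => // a r IH; rewrite inE big_cons => /orP[/eqP<-|ir] Pi.
  by rewrite Pi geq_minl.
by case: ifP => _; [rewrite geq_min IH ?orbT | exact: IH].
Qed.

Lemma colorable_col H c : colorable H c -> col (gV H) (gE H) c.
Proof.
case/existsP=> f /andP[/forallP Hb /forallP He]; exists (fun x => val (f x)); split.
  by move=> x xV; have := Hb x; rewrite xV.
move=> e eE x y xe ye nxy; have := He e; rewrite eE /= => /forallP/(_ x).
rewrite xe => /forallP/(_ y); rewrite ye nxy /=.
by apply: contra => /eqP/val_inj ->.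
Qed.

Lemma colorable_full H : colorable H #|S|.
Proof.
apply/existsP; exists [ffun x => widen_ord (leqnSn _) (enum_rank x)]; apply/andP; split.
  apply/forallP=> x; apply/implyP=> _; rewrite ffunE /=.
  by apply: (leq_trans (ltn_ord _)).
apply/forallP=> e; apply/implyP=> _; apply/forallP=> x; apply/implyP=> _.
apply/forallP=> y; apply/implyP=> _; apply/implyP=> nxy.
rewrite !ffunE; apply: contra nxy => /eqP/(congr1 val) /=.
by move/val_inj/enum_rank_inj ->.
Qed.

Lemma chi_col H : col (gV H) (gE H) (chi H).
Proof.
apply: colorable_col; rewrite /chi.
apply: (big_ind (fun c => colorable H c)) => //; first exact: colorable_full.
by move=> x y Hx Hy; rewrite /minn; case: ifP.
Qed.

Lemma chi_le_card H : chi H <= #|S|.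
Proof.
rewrite /chi; apply: (big_ind (fun c => c <= #|S|)) => //.
  by move=> x y Hx Hy; rewrite geq_min Hx.
by move=> i _; rewrite -ltnS.
Qed.

Lemma col_chi H c : ewf H -> col (gV H) (gE H) c -> chi H <= c.
Proof.
move=> ew [f [Hb He]].
case: (leqP #|S| c) => Sc; first exact: leq_trans (chi_le_card H) Sc.
have cS : c < #|S|.+1 by lia.
have Cc : colorable H c.
  apply/existsP; exists [ffun x => (inord (f x) : 'I_#|S|.+1)]; apply/andP; split.
    apply/forallP=> x; apply/implyP=> xV; rewrite ffunE inordK; first exact: Hb.
    by have := Hb x xV; lia.
  apply/forallP=> e; apply/implyP=> eE; apply/forallP=> x; apply/implyP=> xe.
  apply/forallP=> y; apply/implyP=> ye; apply/implyP=> nxy.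
  have xV : x \in gV H by apply: (subsetP (ew e eE)).
  have yV : y \in gV H by apply: (subsetP (ew e eE)).
  rewrite !ffunE; apply: contraNneq (He e eE x y xe ye nxy) => /(congr1 val).
  move=> E; apply/eqP.
  have hx : f x < #|S|.+1 by have := Hb x xV; lia.
  have hy : f y < #|S|.+1 by have := Hb y yV; lia.
  exact: (etrans (esym (inordK hx)) (etrans E (inordK hy))).
rewrite /chi; apply: (@bigmin_le _ _ _ _ _ (Ordinal cS)) => //; exact: mem_index_enum.
Qed.

Lemma chiP H c : ewf H -> (chi H <= c <-> col (gV H) (gE H) c).
Proof.
move=> ew; split; last exact: col_chi.
move=> hc; apply: col_sub (chi_col H) => //.
Qed.

Lemma ewf_del H F : ewf H -> ewf (del_edges H F).
Proof. by move=> ew e; rewrite inE => /andP[_ /ew]. Qed.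

Lemma clique_bound (A : {set S}) (f : S -> nat) c :
  (forall x, x \in A -> f x < c) ->
  (forall x y, x \in A -> y \in A -> x != y -> f x != f y) -> #|A| <= c.
Proof.
move=> Hb Hi; rewrite cardE -(size_map f).
have -> : c = size (iota 0 c) by rewrite size_iota.
apply: uniq_leq_size.
  rewrite map_inj_in_uniq ?enum_uniq //.
  move=> x y; rewrite !mem_enum => xA yA fxy; apply/eqP.
  by case: (x =P y) => // /eqP nxy; have := Hi x y xA yA nxy; rewrite fxy eqxx.
move=> z /mapP[x]; rewrite mem_enum => xA ->; rewrite mem_iota add0n; exact: Hb.
Qed.

Definition pairish (e : {set S}) := exists a b, e = [set a; b].

Lemma addedge (V : {set S}) (E F : {set {set S}}) (b : {set S}) c :
  (forall e, e \in E -> e \subset V) -> pairish b ->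
  col V (E :\: (b |: F)) c -> col V (E :\: F) c.+1.
Proof.
move=> ew [a [a' ->]] [f [Hb He]].
exists (fun x => if x == a then c else f x); split.
  by move=> x xV; case: eqP => _ //; have := Hb x xV; lia.
move=> e; rewrite inE => /andP[eF eE] x y xe ye nxy.
have xV := subsetP (ew e eE) x xe; have yV := subsetP (ew e eE) y ye.
case: (x =P a) => [xa|xa]; case: (y =P a) => [ya|ya].
- by rewrite xa ya eqxx in nxy.
- by have := Hb y yV; lia.
- by have := Hb x xV; lia.
apply: (He e) => //; rewrite !inE eE (negbTE eF) orbF andbT.
apply/eqP=> ee; move: xe ye; rewrite ee !inE.
move: xa ya => /eqP/negbTE-> /eqP/negbTE-> /= /eqP xa' /eqP ya'.
by rewrite xa' ya' eqxx in nxy.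
Qed.

Lemma es_le H F : F \subset gE H -> chi (del_edges H F) = (chi H).-1 -> es_chi H <= #|F|.
Proof.
move=> sF hc; rewrite /es_chi; apply: bigmin_le; first exact: mem_index_enum.
by rewrite /= powersetE sF hc eqxx.
Qed.

Lemma es_ge H m : m <= #|gE H|.+1 ->
  (forall F, F \subset gE H -> chi (del_edges H F) = (chi H).-1 -> m <= #|F|) ->
  m <= es_chi H.
Proof.
move=> hm hF; rewrite /es_chi; apply: (big_ind (fun x => m <= x)) => //.
  by move=> x y; rewrite leq_min => -> ->.
by move=> F /andP[]; rewrite powersetE => sF /eqP; apply: hF.
Qed.

End Gen.

Lemma del0 (S : finType) (H : graph S) : del_edges H set0 = H.
Proof. by case: H => V E; rewrite /del_edges /= setD0. Qed.

Lemma delDD (S : finType) (H : graph S) A B :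
  del_edges (del_edges H A) B = del_edges H (A :|: B).
Proof. by rewrite /del_edges /= setDDl. Qed.

Lemma set2_of (S : finType) (a b x y : S) :
  x \in [set a; b] -> y \in [set a; b] -> x != y -> [set a; b] = [set x; y].
Proof.
rewrite !inE => /orP[]/eqP-> /orP[]/eqP->; rewrite ?eqxx //= => _.
by rewrite setUC.
Qed.

Lemma small_set (S : finType) (F : {set S}) : #|F| <= 1 -> F = set0 \/ exists f, F = [set f].
Proof.
case E: #|F| => [|[|]] // _; first by left; apply: cards0_eq.
by right; apply/cards1P/eqP.
Qed.

Definition sw (a b t : nat) := if t == a then b else if t == b then a else t.

Lemma sw_inj a b : injective (sw a b).
Proof. by move=> s t; rewrite /sw; repeat (case: eqP => ?); lia. Qed.

Lemma sw_lt a b c t : a < c -> b < c -> t < c -> sw a b t < c.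
Proof. by rewrite /sw; repeat (case: eqP => ?). Qed.

Definition sg (A B n t : nat) : nat := if t == B then A else if t == n then B else t.
Lemma sg_lt A B n t : A < B -> B <= n -> t <= n -> sg A B n t < n.
Proof. rewrite /sg; case: eqP => ?; [lia|]; case: eqP => ?; lia. Qed.
Lemma sg_inj A B n s t : A < B -> B <= n -> s <= n -> t <= n -> s != t ->
  sg A B n s = sg A B n t -> (s = A /\ t = B) \/ (s = B /\ t = A).
Proof.
rewrite /sg => h1 h2 h3 h4 h5; case: (s =P B) => ?; case: (s =P n) => ?; case: (t =P B) => ?; case: (t =P n) => ?; lia.
Qed.

Section Join.
Variables (T : finType) (G : graph T) (u : T) (k : nat).
Hypotheses (hk : 3 <= k) (wfG : wf_graph G) (uV : u \in gV G).

Local Notation S := (T + 'I_k.-1)%type.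
Local Notation G' := (join_Kk G u k).

Definition imG (e : {set T}) : {set S} := [set inl x | x in e].
Definition KE : {set {set S}} :=
  [set [set (inr i : S); inr j] | i in [set: 'I_k.-1], j in [set: 'I_k.-1] & i != j]
  :|: [set [set (inl u : S); inr i] | i : 'I_k.-1].

Lemma memE' e : (e \in gE G') = (e \in [set imG e | e in gE G]) || (e \in KE).
Proof. by rewrite /= /KE -setUA [in LHS]inE. Qed.

Lemma KE_cases e : e \in KE ->
  (exists i j, i != j /\ e = [set inr i; inr j]) \/ (exists i, e = [set inl u; inr i]).
Proof.
rewrite inE => /orP[/imset2P[i j _]|/imsetP[i _ ->]]; last by right; exists i.
by rewrite inE => /andP[_ ij] ->; left; exists i, j.
Qed.

Lemma K2_mem (i j : 'I_k.-1) : i != j -> [set inr i; inr j] \in KE.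
Proof.
move=> ij; rewrite inE; apply/orP; left; apply/imset2P.
by exists i j; rewrite ?inE ?ij.
Qed.

Lemma K3_mem (i : 'I_k.-1) : [set inl u; inr i] \in KE.
Proof. by rewrite inE; apply/orP; right; apply/imsetP; exists i. Qed.

Definition Kvert (x : S) := if x is inr _ then true else x == inl u.
Definition idx (x : S) := if x is inr i then (val i).+1 else 0.

Lemma KE_Kvert e x : e \in KE -> x \in e -> Kvert x.
Proof. by case/KE_cases=> [[i [j [_ ->]]]|[i ->]]; rewrite !inE => /orP[]/eqP-> /=; rewrite ?eqxx. Qed.

Lemma idx_inj x y : Kvert x -> Kvert y -> idx x = idx y -> x = y.
Proof.
case: x => [a|i]; case: y => [b|j] //=; first by move=> /eqP-> /eqP->.
by move=> _ _ [] /val_inj ->.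
Qed.

Lemma idx_lt x : idx x < k.
Proof. case: x => [a|i] /=; [lia | have := ltn_ord i; lia]. Qed.

Lemma KE_pair e : e \in KE -> pairish e.
Proof. by case/KE_cases=> [[i [j [_ ->]]]|[i ->]]; do 2 eexists. Qed.

Lemma imG_pair e : e \in gE G -> pairish (imG e).
Proof.
move=> /wfG [/eqP/cards2P [a [b [_ ->]]] _].
by exists (inl a), (inl b); rewrite /imG imsetU1 imset_set1.
Qed.

Lemma imG_notK e : imG e \notin KE.
Proof.
apply/negP=> /KE_cases [[i [j [_ E]]]|[i E]].
  by have := setU11 (inr i : S) [set inr j]; rewrite -E => /imsetP[].
by have := set21 (inr i : S) (inl u); rewrite setUC -E => /imsetP[].
Qed.

Lemma imG_inj : injective imG.
Proof. apply: imset_inj; exact: inl_inj. Qed.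

Lemma ewfG' : ewf G'.
Proof.
move=> e; rewrite memE' => /orP[/imsetP[e0 e0E ->]|eK].
  apply/subsetP=> x /imsetP[y ye ->]; rewrite !inE; apply/orP; left.
  by apply: imset_f; have [_ /subsetP] := wfG e0E; apply.
apply/subsetP=> x xe; have := KE_Kvert eK xe.
case: x xe => [a|i] /= _; rewrite !inE.
  by move=> /eqP[->]; apply/orP; left; apply: imset_f.
by move=> _; apply/orP; right; apply: imset_f.
Qed.

Definition colG (FG : {set {set T}}) c := col (gV G) (gE G :\: FG) c.
Definition colG' (F : {set {set S}}) c := col (gV G') (gE G' :\: F) c.

Lemma chiG'P (F : {set {set S}}) c : chi (del_edges G' F) <= c <-> colG' F c.
Proof. by apply: chiP; apply: ewf_del; exact: ewfG'. Qed.

Lemma ewfG : ewf G.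
Proof. by move=> e /wfG[]. Qed.

Lemma chiGP (F : {set {set T}}) c : chi (del_edges G F) <= c <-> colG F c.
Proof. by apply: chiP; apply: ewf_del; exact: ewfG. Qed.

Lemma restr (F : {set {set S}}) (FG : {set {set T}}) c : colG' F c ->
  (forall e, e \in gE G -> e \notin FG -> imG e \notin F) -> colG FG c.
Proof.
move=> [f [Hb He]] hF; exists (fun x => f (inl x)); split.
  by move=> x xV; apply: Hb; rewrite !inE imset_f.
move=> e; rewrite inE => /andP[eF eE] x y xe ye nxy.
apply: (He (imG e)); [|exact: imset_f|exact: imset_f|].
  by rewrite inE hF // memE' imset_f.
by apply: contra nxy => /eqP[->].
Qed.

Lemma glue (F : {set {set S}}) (FG : {set {set T}}) c (gK : S -> nat) : colG FG c ->
  gK (inl u) < c -> (forall i, gK (inr i) < c) ->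
  (forall e, e \in KE -> e \notin F -> forall x y, x \in e -> y \in e -> x != y -> gK x != gK y) ->
  (forall e, e \in gE G -> e \in FG -> imG e \in F) -> colG' F c.
Proof.
move=> [fG [Hb He]] gu gi gKi hF.
pose h (x : S) := match x with inl y => sw (fG u) (gK (inl u)) (fG y) | inr i => gK (inr i) end.
have hK x : Kvert x -> h x = gK x.
  by case: x => [a|i] //= /eqP[->]; rewrite /sw eqxx.
exists h; split.
  move=> [a|i]; rewrite !inE => /orP[/imsetP[y yV eq]|/imsetP[j _ eq]] //=.
    by case: eq => ->; exact: (sw_lt (Hb u uV) gu (Hb y yV)).
move=> e; rewrite inE => /andP[eF]; rewrite memE' => /orP[/imsetP[e0 e0E ee]|eK] x y xe ye nxy.
  rewrite ee in eF xe ye.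
  move: xe ye nxy => /imsetP[x' x'e ->] /imsetP[y' y'e ->] nxy /=.
  rewrite (inj_eq (@sw_inj _ _)); apply: (He e0) => //.
    rewrite inE e0E andbT; apply: contra eF; exact: hF.
by rewrite !hK ?(KE_Kvert eK) //; exact: (gKi e eK eF x y xe ye nxy).
Qed.

Lemma KE_xy e x y : e \in KE -> x \in e -> y \in e -> x != y -> e = [set x; y].
Proof. by case/KE_cases=> [[i [j [_ ->]]]|[i ->]]; apply: set2_of. Qed.

Lemma Kcol eK : eK \in KE -> exists gK : S -> nat,
  [/\ gK (inl u) < k.-1, forall i, gK (inr i) < k.-1 &
   forall e, e \in KE -> e != eK -> forall x y, x \in e -> y \in e -> x != y -> gK x != gK y].
Proof.
move=> eKK.
have [p [q [pK qK pq epq]]] : exists p q, [/\ Kvert p, Kvert q, idx p < idx q & eK = [set p; q]].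
  case/KE_cases: eKK => [[i [j [ij ->]]]|[i ->]].
    case: (ltnP i j) => lij.
      by exists (inr i), (inr j).
    exists (inr j), (inr i); split=> //=; last by rewrite setUC.
    have ij' : (val i != val j) := ij.
    by rewrite ltnS ltn_neqAle lij andbT eq_sym.
  by exists (inl u), (inr i); rewrite /= eqxx.
have idxl x : idx x <= k.-1 by have := idx_lt x; lia.
exists (fun x => sg (idx p) (idx q) k.-1 (idx x)); split.
- exact: sg_lt pq (idxl _) (idxl _).
- by move=> i; exact: sg_lt pq (idxl _) (idxl _).
move=> e eKE neK x y xe ye nxy.
have xK := KE_Kvert eKE xe; have yK := KE_Kvert eKE ye.
have nidx : idx x != idx y by apply: contra nxy => /eqP/(idx_inj xK yK)->.
apply/negP=> /eqP hs.
have [[ex ey]|[ex ey]] := sg_inj pq (idxl _) (idxl _) (idxl _) nidx hs.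
- have xp := idx_inj xK pK ex; have yq := idx_inj yK qK ey.
  by move: neK; rewrite (KE_xy eKE xe ye nxy) epq xp yq eqxx.
- have xp := idx_inj xK qK ex; have yq := idx_inj yK pK ey.
  by move: neK; rewrite (KE_xy eKE xe ye nxy) epq xp yq setUC eqxx.
Qed.

Lemma clique (F : {set {set S}}) c : colG' F c -> (forall e, e \in KE -> e \notin F) -> k <= c.
Proof.
move=> [f [Hb He]] hF.
pose A : {set S} := inl u |: [set inr i | i : 'I_k.-1].
have cA : #|A| = k.
  rewrite cardsU1 card_imset; last exact: inr_inj.
  have -> : (inl u : S) \notin [set inr i | i : 'I_k.-1] by apply/imsetP=> -[].
  rewrite card_ord; lia.
rewrite -cA; apply: (clique_bound (f := f)).
  move=> x; rewrite !inE => /orP[/eqP->|/imsetP[i _ ->]]; apply: Hb; rewrite !inE.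
    by rewrite imset_f.
  by rewrite imset_f ?orbT.
have edge e x y : e \in KE -> x \in e -> y \in e -> x != y -> f x != f y.
  move=> eK xe ye nxy; apply: (He e) => //.
  by rewrite inE hF // memE' eK orbT.
move=> x y; rewrite !inE => /orP[/eqP->|/imsetP[i _ ->]] /orP[/eqP->|/imsetP[j _ ->]];
  rewrite ?eqxx // => nxy.
- by apply: (edge [set inl u; inr j]); rewrite ?K3_mem ?inE ?eqxx ?orbT.
- by apply: (edge [set inl u; inr i]); rewrite ?K3_mem ?inE ?eqxx ?orbT.
- have ij : i != j by apply: contra nxy => /eqP->.
  by apply: (edge [set inr i; inr j]); rewrite ?K2_mem ?inE ?eqxx ?orbT.
Qed.


Hypothesis noiso : no_isolated G.

Lemma k1 : 0 < k.-1. Proof. lia. Qed.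
Definition i0 : 'I_k.-1 := Ordinal k1.
Definition eK0 : {set S} := [set inl u; inr i0].
Lemma eK0K : eK0 \in KE. Proof. exact: K3_mem. Qed.

Lemma imG_E' e : e \in gE G -> imG e \in gE G'.
Proof. by move=> eE; rewrite memE' imset_f. Qed.
Lemma KE_E' e : e \in KE -> e \in gE G'.
Proof. by move=> eK; rewrite memE' eK orbT. Qed.

Lemma E'_cases e : e \in gE G' -> (exists2 e0, e0 \in gE G & e = imG e0) \/ e \in KE.
Proof. by rewrite memE' => /orP[/imsetP[e0 ? ->]|]; [left; exists e0|right]. Qed.

Lemma pair_E' e : e \in gE G' -> pairish e.
Proof. by case/E'_cases=> [[e0 e0E ->]|]; [apply: imG_pair|apply: KE_pair]. Qed.

Lemma noKcol (F : {set {set S}}) : (forall e, e \in gE G -> imG e \notin F) -> ~ colG set0 k.-1 -> ~ colG' F k.-1.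
Proof. by move=> hF nG hc; apply: nG; apply: (restr (FG:=set0) hc) => e eE _; exact: hF. Qed.

Lemma noGcol (F : {set {set S}}) : (forall e, e \in KE -> e \notin F) -> ~ colG' F k.-1.
Proof. by move=> hF /clique /(_ hF); lia. Qed.

Lemma idx_col : colG set0 k -> colG' set0 k.
Proof.
move=> hG; apply: (glue (gK := idx)) hG _ _ _ _.
- exact: idx_lt.
- by move=> i; apply: idx_lt.
- move=> e eK _ x y xe ye nxy; apply: contra nxy => /eqP.
  by move/(idx_inj (KE_Kvert eK xe) (KE_Kvert eK ye)) ->.
- by move=> e _; rewrite inE.
Qed.

Lemma two_col e eK : e \in gE G -> eK \in KE -> colG [set e] k.-1 -> colG' [set imG e; eK] k.-1.
Proof.
move=> eE eKK hc; have [gK [g1 g2 g3]] := Kcol eKK.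
apply: (glue (gK := gK)) hc g1 g2 _ _.
  move=> e' e'K e'F; apply: g3 => //; apply: contra e'F => /eqP->.
  by rewrite !inE eqxx orbT.
by move=> e' _; rewrite !inE => /eqP->; rewrite eqxx.
Qed.

Lemma chi_del0 : chi G' = chi (del_edges G' set0).
Proof. by rewrite del0. Qed.

Lemma chi_two (e1 e2 : {set S}) : e2 \in gE G' -> chi (del_edges G' [set e1]) = k ->
  colG' [set e1; e2] k.-1 -> chi (del_edges G' [set e1; e2]) = k.-1.
Proof.
move=> e2E h1 hc.
have le : chi (del_edges G' [set e1; e2]) <= k.-1 by apply/chiG'P.
case: (leqP k.-1 (chi (del_edges G' [set e1; e2]))) => ge; first lia.
have : chi (del_edges G' [set e1; e2]) <= k.-2 by lia.
move/chiG'P => hc2.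
have : colG' [set e1] (k.-2).+1.
  apply: (addedge _ (pair_E' e2E)); first exact: ewfG'.
  by rewrite /colG' setUC.
have -> : (k.-2).+1 = k.-1 by lia.
move/chiG'P; lia.
Qed.

Lemma fwd : colG set0 k -> ~ colG set0 k.-1 -> (forall e, e \in gE G -> colG [set e] k.-1) ->
  k2_critical k G'.
Proof.
move=> hG nG hE.
have F1 := idx_col hG.
have [e0 e0E ue0] := noiso uV.
have chiG' : chi G' = k.
  rewrite chi_del0.
  have le : chi (del_edges G' set0) <= k by apply/chiG'P.
  case: (leqP k (chi (del_edges G' set0))) => ge; first lia.
  have : chi (del_edges G' set0) <= k.-1 by lia.
  move/chiG'P => hc; exfalso; apply: (noKcol _ nG hc) => e eE; by rewrite inE.
have chi1 e' : e' \in gE G' -> chi (del_edges G' [set e']) = k.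
  move=> e'E.
  have le : chi (del_edges G' [set e']) <= k.
    apply/chiG'P; apply: col_sub F1 => //; apply: setDS; exact: sub0set.
  case: (leqP k (chi (del_edges G' [set e']))) => ge; first lia.
  have : chi (del_edges G' [set e']) <= k.-1 by lia.
  move/chiG'P => hc; exfalso; case/E'_cases: e'E hc => [[e eE ->]|eK] hc.
    by apply: (noGcol _ hc) => e1 e1K; rewrite inE; apply: contra (imG_notK e) => /eqP <-.
  by apply: (noKcol _ nG hc) => e eE; rewrite inE; apply: contra (imG_notK e) => /eqP ->.
have ne0 : imG e0 != eK0 by apply: contra (imG_notK e0) => /eqP ->; exact: eK0K.
have es2 : es_chi G' = 2.
  apply/eqP; rewrite eqn_leq; apply/andP; split.
    have c2 : #|[set imG e0; eK0]| = 2 by rewrite cards2 ne0.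
    rewrite -c2; apply: es_le.
      by apply/subsetP=> x; rewrite in_set2 => /orP[]/eqP->; [exact: imG_E' e0E | exact: KE_E' eK0K].
    rewrite chiG'; apply: chi_two; [exact: KE_E' eK0K|exact: chi1 (imG_E' e0E)|].
    exact: two_col e0E eK0K (hE e0 e0E).
  apply: es_ge.
    by rewrite ltnS; apply/card_gt0P; exists eK0; apply: KE_E' eK0K.
  move=> F sF; rewrite chiG' => hc.
  case: (leqP 2 #|F|) => // /small_set [F0|[f Ff]].
    by move: hc; rewrite F0 -chi_del0 chiG'; lia.
  by move: hc; rewrite Ff chi1; [lia | apply: (subsetP sF); rewrite Ff set11].
split => //.
move=> e' e'E; rewrite es2.
  have [e'' [e''E ne hc]] : exists e'', [/\ e'' \in gE G', e'' != e' & colG' [set e'; e''] k.-1].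
    case/E'_cases: (e'E) => [[e eE ->]|eK].
      exists eK0; split; [exact: KE_E' eK0K| |exact: two_col eE eK0K (hE e eE)].
      by rewrite eq_sym; apply: contra (imG_notK e) => /eqP ->; exact: eK0K.
    exists (imG e0); split; [exact: imG_E'| |].
      by apply: contra (imG_notK e0) => /eqP ->.
    by rewrite /colG' setUC; exact: (two_col e0E eK (hE e0 e0E)).
  have c1 := chi1 e' e'E.
  suff : es_chi (del_edges G' [set e']) <= #|[set e'']| by rewrite cards1.
  apply: es_le.
    by apply/subsetP=> x; rewrite in_set1 => /eqP->; rewrite in_setD in_set1 ne e''E.
  by rewrite delDD c1; apply: chi_two.
Qed.


Lemma crit_of : (forall e, e \in gE G -> colG [set e] k.-1) ->
  forall H, subgraph H G -> (gV H, gE H) <> (gV G, gE G) -> chi H < k.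
Proof.
move=> hE H [sV sE sEV] neq.
have ewH : ewf H by move=> e /sEV.
have [EE|[e eE eH]] : gE H = gE G \/ exists2 e, e \in gE G & e \notin gE H.
- case: (boolP (gE G \subset gE H)) => s; first by left; apply/eqP; rewrite eqEsubset sE s.
  by right; move/subsetPn: s => [e ? ?]; exists e.
- exfalso; apply: neq; congr (_, _) => //; apply/eqP; rewrite eqEsubset sV /=.
  apply/subsetP=> x xV; have [e eE xe] := noiso xV.
  by rewrite -EE in eE; apply: (subsetP (sEV e eE)).
have : chi H <= k.-1.
  apply: col_chi => //; apply: col_sub (hE e eE) => //.
  apply/subsetP=> e' e'H; rewrite in_setD in_set1 (subsetP sE _ e'H) andbT.
  by apply: contra eH => /eqP <-.
lia.
Qed.

Lemma bwd : k2_critical k G' -> chi_critical k G.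
Proof.
move=> [escr chiG' es2].
have B1 : colG' set0 k by apply/chiG'P; rewrite -chi_del0 chiG'.
have B2 : colG set0 k by apply: (restr (F := set0)) B1 _ => e _ _; rewrite inE.
have B3 : ~ colG set0 k.-1.
  move=> hc.
  have [gK [g1 g2 g3]] := Kcol eK0K.
  have hc' : colG' [set eK0] k.-1.
    apply: (glue (gK := gK)) hc g1 g2 _ _.
      by move=> e eK; rewrite in_set1 => ne; apply: g3.
    by move=> e _; rewrite inE.
  have ch : chi (del_edges G' [set eK0]) = k.-1.
    have le : chi (del_edges G' [set eK0]) <= k.-1 by apply/chiG'P.
    case: (leqP k.-1 (chi (del_edges G' [set eK0]))) => ge; first lia.
    have : chi (del_edges G' [set eK0]) <= k.-2 by lia.
    move/chiG'P => hc2.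
    have : colG' set0 (k.-2).+1.
      apply: (addedge _ (KE_pair eK0K)); first exact: ewfG'.
      by rewrite /colG' setU0.
    have -> : (k.-2).+1 = k.-1 by lia.
    by move/chiG'P; rewrite -chi_del0; lia.
  have : es_chi G' <= #|[set eK0]|.
    apply: es_le; first by rewrite sub1set; exact: KE_E' eK0K.
    by rewrite ch chiG'.
  by rewrite cards1 es2.
have chiG : chi G = k.
  have le : chi G <= k by rewrite -(del0 G); apply/chiGP.
  case: (leqP k (chi G)) => ge; first lia.
  have : chi G <= k.-1 by lia.
  by rewrite -(del0 G) => /chiGP.
have B4 : forall e, e \in gE G -> colG [set e] k.-1.
  move=> e eE; apply/chiGP.
  case: (leqP (chi (del_edges G [set e])) k.-1) => // gt; exfalso.
  have nc : ~ colG [set e] k.-1 by move/chiGP; lia.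
  have ie := imG_E' eE.
  have chiH : chi (del_edges G' [set imG e]) = k.
    have le : chi (del_edges G' [set imG e]) <= k.
      apply/chiG'P; apply: col_sub B1 => //; apply: setDS; exact: sub0set.
    case: (leqP k (chi (del_edges G' [set imG e]))) => ge; first lia.
    have : chi (del_edges G' [set imG e]) <= k.-1 by lia.
    move/chiG'P => hc; exfalso; apply: nc; apply: (restr hc) => e' e'E.
    by rewrite !in_set1; apply: contra => /eqP/imG_inj ->.
  have := escr (imG e) ie; rewrite es2 ltnNge => /negP; apply.
  apply: es_ge.
    rewrite ltnS; apply/card_gt0P; exists eK0.
    rewrite in_setD in_set1 (KE_E' eK0K) andbT.
    by apply: contra (imG_notK e) => /eqP <-; exact: eK0K.
  move=> F sF; rewrite chiH => hc.
  case: (leqP 2 #|F|) => // /small_set [F0|[f Ff]].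
    by move: hc; rewrite F0 del0 chiH; lia.
  have fE : f \in gE G' :\: [set imG e] by apply: (subsetP sF); rewrite Ff set11.
  move: fE; rewrite in_setD in_set1 => /andP[nf fE].
  move: hc; rewrite Ff delDD => hc.
  have : chi (del_edges G' [set imG e; f]) <= k.-1 by rewrite hc.
  move/chiG'P => hc2.
  exfalso; case/E'_cases: fE nf hc2 => [[e2 e2E ->]|fK] nf hc2.
    apply: (noGcol _ hc2) => e1 e1K; rewrite in_set2; apply/negP => /orP[]/eqP eq.
      by have := imG_notK e; rewrite -eq e1K.
    by have := imG_notK e2; rewrite -eq e1K.
  apply: nc; apply: (restr hc2) => e' e'E; rewrite in_set1 in_set2 => ne.
  apply/negP => /orP[/eqP/imG_inj eq|/eqP eq].
    by rewrite eq eqxx in ne.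
  by have := imG_notK e'; rewrite eq fK.
split => //; exact: crit_of.
Qed.

End Join.

Theorem theorem3p1 (T : finType) (G : graph T) (u : T) (k : nat) :
  3 <= k -> wf_graph G -> connected G -> no_isolated G -> u \in gV G ->
  (chi_critical k G <-> k2_critical k (join_Kk G u k)).
Proof.
move=> hk wf _ noiso uV; split; last exact: bwd.
move=> [chiG crit]; apply: fwd => //.
- by apply/chiGP => //; rewrite del0 chiG.
- by move/(chiGP wf); rewrite del0 chiG; lia.
move=> e eE; apply/chiGP => //.
have : chi (del_edges G [set e]) < k.
  apply: crit.
    split=> //=; [exact: subsetDl | move=> e'; rewrite in_setD => /andP[_ /wf[]] //].
  move=> [] /eqP; rewrite eqEsubset => /andP[_ /subsetP /(_ e eE)].
  by rewrite in_setD in_set1 eqxx.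
lia.
Qed.
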